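(* Let $q$ be a prime power and $n$ a positive integer. Let $g, h\in \mathbb{F}_q[x]$, where $g(x)$ is a monic divisor of $x^n-1$, and let $f, k\in\mathbb{F}_{q^n}[x]$ be such that $k(L_g(\mathbb{F}_{q^n}))\subseteq \mathbb{F}_q^*$. Let $P(x)=f(L_g(x))+k(L_g(x))\cdot L_h(x)$. Then $P$ is a permutation polynomial of $\mathbb{F}_{q^n}$ if and only if both of the following hold: (i) $\gcd(g, h)=1$; (ii) the polynomial $Q(x)=L_g(f(x))+k(x)\cdot L_h(x)$ induces a permutation of the set $L_g(\mathbb{F}_{q^n})=\{L_g(c):c\in\mathbb{F}_{q^n}\}$.
   Context: For a polynomial $u(x)=\sum_{i=0}^m a_i x^i\in\mathbb{F}_q[x]$, its linearized $q$-associate is $L_u(x)=\sum_{i=0}^m a_i x^{q^i}$. A polynomial $P\in\mathbb{F}_{q^n}[x]$ is a permutation polynomial of $\mathbb{F}_{q^n}$ if $c\mapsto P(c)$ is a bijection of $\mathbb{F}_{q^n}$. *)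

(* Defs.v *)
From HB Require Import structures.
From mathcomp Require Import all_boot all_order all_algebra all_field.
Set Implicit Arguments. Unset Strict Implicit. Unset Printing Implicit Defensive.
Import GRing.Theory.
Local Open Scope ring_scope.

(* F plays the role of F_q (q = #|F|), L the role of F_{q^n}, an extension of F
   of dimension n.  Elements a of F are embedded in L as a%:A. *)

Definition linq (F : finFieldType) (L : fieldExtType F) (u : {poly F}) (x : L) : L :=
  \sum_(i < size u) (u`_i)%:A * x ^+ (#|F| ^ i)%N.

Definition linq_image (F : finFieldType) (L : fieldExtType F) (u : {poly F}) (y : L) : Prop :=
  exists c : L, y = linq u c.

Definition is_perm_poly (F : finFieldType) (L : fieldExtType F) (P : L -> L) : Prop :=
  bijective P.

Definition permutes_set (T : Type) (S : T -> Prop) (Q : T -> T) : Prop :=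
  [/\ (forall y, S y -> S (Q y)),
      (forall y1 y2, S y1 -> S y2 -> Q y1 = Q y2 -> y1 = y2) &
      (forall z, S z -> exists2 y, S y & Q y = z)].

(* Main.v *)
Require Import Defs.
From HB Require Import structures.
From mathcomp Require Import all_boot all_order all_algebra all_field.
From mathcomp Require Import zify.
Import GRing.Theory.
Local Open Scope ring_scope.
Set Warnings "-notation-overridden -ambiguous-paths".
Section Lin.
Variables (F : finFieldType) (L : fieldExtType F).
Local Notation q := #|F|.

Lemma q_gt1 : (1 < q)%N. Proof. exact: finNzRing_gt1. Qed.

Lemma frobD (x y : L) : (x + y) ^+ q = x ^+ q + y ^+ q.
Proof.
have [p _ pcharFp] := finPcharP F; rewrite (card_pprimeChar pcharFp).
elim: (logn _ _) => [|m IHm]; first by rewrite !expr1.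
rewrite expnSr !exprM {}IHm.
by rewrite -(pchar_lalg L) in pcharFp; rewrite -!(pFrobenius_autE pcharFp) rmorphD.
Qed.

Lemma frob0 : (0 : L) ^+ q = 0.
Proof. by rewrite expr0n; case: q q_gt1. Qed.

Lemma frobnD i (x y : L) : (x + y) ^+ (q ^ i) = x ^+ (q ^ i) + y ^+ (q ^ i).
Proof. by elim: i => [|i IH]; rewrite ?expr1 // expnSr !exprM IH frobD. Qed.

Lemma frobA (a : F) : (a%:A : L) ^+ q = a%:A.
Proof. by rewrite -in_algE -[LHS]rmorphXn expf_card. Qed.

Lemma frobnA i (a : F) : (a%:A : L) ^+ (q ^ i) = a%:A.
Proof. by elim: i => [|i IH]; rewrite ?expr1 // expnSr exprM IH frobA. Qed.

Lemma frob_sum I (r : seq I) (P : pred I) (G : I -> L) :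
  (\sum_(i <- r | P i) G i) ^+ q = \sum_(i <- r | P i) (G i) ^+ q.
Proof. exact: (big_morph (fun x : L => x ^+ q) frobD frob0). Qed.

Lemma linq_sum (u : {poly F}) (x : L) N : (size u <= N)%N ->
  linq u x = \sum_(i < N) (u`_i)%:A * x ^+ (q ^ i).
Proof.
move=> hN; rewrite /linq (big_ord_widen N (fun i => (u`_i)%:A * x ^+ (q ^ i)) hN).
rewrite big_mkcond /=; apply: eq_bigr => i _; case: ifP => // /negbT.
by rewrite -leqNgt => /(nth_default 0) ->; rewrite scale0r mul0r.
Qed.

Lemma linqD (u v : {poly F}) (x : L) : linq (u + v) x = linq u x + linq v x.
Proof.
set N := maxn (size u) (size v).
rewrite !(@linq_sum _ _ N) ?leq_maxl ?leq_maxr ?size_polyD //.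
by rewrite -big_split; apply: eq_bigr => i _; rewrite coefD scalerDl mulrDl.
Qed.

Lemma linqZ (c : F) (u : {poly F}) (x : L) : linq (c *: u) x = c%:A * linq u x.
Proof.
rewrite !(@linq_sum _ _ (size u)) ?size_scale_leq // mulr_sumr.
by apply: eq_bigr => i _; rewrite coefZ -!in_algE rmorphM mulrA.
Qed.

Lemma linq0 (x : L) : linq 0 x = 0.
Proof. by rewrite /linq size_poly0 big_ord0. Qed.

Lemma linqC (c : F) (x : L) : linq c%:P x = c%:A * x.
Proof.
rewrite (@linq_sum _ _ 1) ?size_polyC ?leq_b1 // big_ord1 coefC /=.
by rewrite expn0 expr1.
Qed.

Lemma linqN (u : {poly F}) (x : L) : linq (- u) x = - linq u x.
Proof. by rewrite -scaleN1r linqZ scaleNr scale1r mulN1r. Qed.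

Lemma linq_add (u : {poly F}) (x y : L) : linq u (x + y) = linq u x + linq u y.
Proof. by rewrite /linq -big_split; apply: eq_bigr => i _; rewrite frobnD mulrDr. Qed.

Lemma linq_scale (u : {poly F}) (a : F) (x : L) :
  linq u (a%:A * x) = a%:A * linq u x.
Proof.
rewrite /linq mulr_sumr; apply: eq_bigr => i _.
by rewrite exprMn frobnA mulrCA.
Qed.

Lemma linq_x0 (u : {poly F}) : linq u (0 : L) = 0.
Proof. by apply: (@addrI _ (linq u 0)); rewrite -linq_add !addr0. Qed.

Lemma linq_opp (u : {poly F}) (x : L) : linq u (- x) = - linq u x.
Proof. by apply/eqP; rewrite -subr_eq0 opprK -linq_add addNr linq_x0. Qed.

Lemma linq_sub (u : {poly F}) (x y : L) : linq u (x - y) = linq u x - linq u y.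
Proof. by rewrite linq_add linq_opp. Qed.

Lemma linq_frob (u : {poly F}) (x : L) : linq u (x ^+ q) = (linq u x) ^+ q.
Proof.
rewrite /linq frob_sum; apply: eq_bigr => i _.
by rewrite exprMn frobA -!exprM mulnC.
Qed.

Lemma linqXM (u : {poly F}) (x : L) : linq ('X * u) x = linq u (x ^+ q).
Proof.
rewrite (@linq_sum _ _ (size u).+1); last first.
  by rewrite mulrC (leq_trans (size_polyMleq _ _)) // size_polyX addn2.
rewrite big_ord_recl coefXM /= scale0r mul0r add0r /linq.
by apply: eq_bigr => i _; rewrite coefXM /= /bump /= add1n expnS -exprM mulnC.
Qed.

Lemma linqM (u v : {poly F}) (x : L) : linq (u * v) x = linq u (linq v x).
Proof.
elim/poly_ind: u v x => [|u c IH] v x; first by rewrite mul0r !linq0.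
rewrite mulrDl -mulrA mul_polyC linqD IH linqZ linqXM linq_frob.
by rewrite linqD linqC [u * 'X]mulrC linqXM.
Qed.

Lemma linq_comm (u v : {poly F}) (x : L) : linq u (linq v x) = linq v (linq u x).
Proof. by rewrite -!linqM mulrC. Qed.

End Lin.
Section Fin.
Variables (F : finFieldType) (L : fieldExtType F).
Local Notation q := #|F|.
Let LL := finvect_type L.

Lemma cardLL : #|LL| = (q ^ \dim {:L})%N.
Proof. by rewrite -(card_vspacef (Vector.class LL)) card_vspace. Qed.

Lemma fermatL (x : L) : x ^+ (q ^ \dim {:L}) = x.
Proof. by rewrite -cardLL; exact: (expf_card (x : LL)). Qed.

Lemma linqXn m (x : L) : linq 'X^m x = x ^+ (q ^ m).
Proof.
elim: m x => [|m IH] x; first by rewrite expr0 -polyC1 linqC scale1r mul1r expr1.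
by rewrite exprS linqXM IH -exprM expnS mulnC.
Qed.

Lemma linq_Xn1 (x : L) : linq ('X^(\dim {:L}) - 1) x = 0.
Proof. by rewrite linqD linqN linqXn fermatL -polyC1 linqC scale1r mul1r subrr. Qed.

Lemma no_kernel (e : {poly F}) : e != 0 -> (size e <= \dim {:L})%N ->
  (forall w : L, linq e w = 0) -> False.
Proof.
move=> e0 hs hw.
have [s' hs'] : exists s', size e = s'.+1.
  by move: e0; rewrite -size_poly_eq0; case: (size e) => // s' _; exists s'.
pose E : {poly L} := \sum_(i < s'.+1) (e`_i)%:A *: 'X^(q ^ i).
have hE : forall w, E.[w] = linq e w.
  move=> w; rewrite (@linq_sum _ _ _ _ s'.+1) ?hs' // horner_sum.
  by apply: eq_bigr => i _; rewrite hornerZ hornerXn.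
have En0 : E != 0.
  apply/negP => /eqP /(congr1 (fun p : {poly L} => p`_(q ^ s'))).
  rewrite coef0 coef_sum big_ord_recr /= big1 ?add0r.
    rewrite coefZ coefXn eqxx mulr1 => /eqP; rewrite scaler_eq0 oner_eq0 orbF.
    apply/negP; have := e0; rewrite -lead_coef_eq0 lead_coefE hs' /=; exact.
  move=> i _; rewrite coefZ coefXn eqn_exp2l ?q_gt1 //.
  by rewrite eq_sym (ltn_eqF (ltn_ord i)) mulr0.
have szE : (size E <= (q ^ s').+1)%N.
  apply: (leq_trans (size_sum _ _ _)); apply/bigmax_leqP => i _.
  apply: (leq_trans (size_scale_leq _ _)); rewrite size_polyXn ltnS.
  rewrite leq_pexp2l ?(ltnW (q_gt1 F)) //; first by rewrite -ltnS.
have := @roots_geq_poly_eq0 _ E (enum LL) _ (enum_uniq _).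
have hc : size (enum LL) = #|LL| by rewrite cardE.
rewrite hc cardLL => E0.

move/negP: En0; apply; rewrite E0 //.
  by apply/allP => w _; rewrite /root hE hw.
apply: (leq_trans szE).
have q1 := q_gt1 F; move: hs; rewrite hs'.
case: (\dim {:L}) => // m hm.
have h1 : (q ^ s'.+1 <= q ^ m.+1)%N := leq_pexp2l (ltnW q1) hm.
apply: leq_trans h1; rewrite expnS.
have : (0 < q ^ s')%N by rewrite expn_gt0 (ltnW q1).
nia.
Qed.
End Fin.

Theorem theorem2p5 (F : finFieldType) (L : fieldExtType F) (n : nat)
  (hn : (0 < n)%N) (hdim : \dim {: L}%VS = n)
  (g h : {poly F}) (f k : {poly L})
  (hgmon : g \is monic) (hgdiv : g %| 'X^n - 1)
  (hk : forall c : L, exists2 a : F, a != 0 & k.[linq g c] = a%:A) :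
  is_perm_poly (fun x : L => f.[linq g x] + k.[linq g x] * linq h x)
  <->
  (coprimep g h /\
   permutes_set (linq_image g) (fun x : L => linq g f.[x] + k.[x] * linq h x)).
Proof.
pose LL := finvect_type L.
pose P x := f.[linq g x] + k.[linq g x] * linq h x.
pose Q y := linq g f.[y] + k.[y] * linq h y.
change (bijective P <-> coprimep g h /\ permutes_set (linq_image g) Q).
have key : forall x, linq g (P x) = Q (linq g x).
  move=> x; have [a _ ha] := hk x.
  by rewrite /P /Q ha linq_add linq_scale linq_comm.
have hX : forall w : L, linq ('X^n - 1) w = 0 by move=> w; rewrite -hdim linq_Xn1.
split.
- case=> Pinv PK KP.
  have Pinj : injective P := can_inj PK.
  split.
  + apply: contraT => ncop.
    set d := gcdp g h.
    have d0 : d != 0 by rewrite gcdp_eq0 negb_and monic_neq0.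
    have sd : (1 < size d)%N.
      move: ncop d0; rewrite coprimep_def -/d -size_poly_eq0; lia.
    have dX : d %| 'X^n - 1 := dvdp_trans (dvdp_gcdl g h) hgdiv.
    case/dvdpP: dX => e he.
    have sX : size ('X^n - 1 : {poly F}) = n.+1 by rewrite -polyC1 size_XnsubC.
    have e0 : e != 0.
      by apply/negP => /eqP e0; move: sX; rewrite he e0 mul0r size_poly0.
    have se : (size e <= n)%N.
      move: sX; rewrite he size_mul // ; move: sd; case: (size d) => [|[|m]] // _; rewrite !addnS /= => -[] h1; by rewrite -h1 leq_addr.
    have [z z0 dz] : exists2 z : L, z != 0 & linq d z = 0.
      case: (boolP [exists z : LL, (z != 0) && (linq d z == 0)]).
        by case/existsP => z /andP[z0 /eqP dz]; exists z.
      move=> /existsPn hno; exfalso; apply: (@no_kernel F L e e0).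
        by rewrite hdim.
      move=> w; have := hno (linq e w); rewrite negb_and negbK.
      case/orP => [/eqP // | ].
      by rewrite -linqM mulrC -he => /eqP H; exfalso; apply: H; apply: hX.
    have gz : linq g z = 0.
      case/dvdpP: (dvdp_gcdl g h) => g' hg'.
      have : linq (g' * d) z = 0 by rewrite linqM dz linq_x0.
      by rewrite -hg'.
    have hz : linq h z = 0.
      case/dvdpP: (dvdp_gcdr g h) => h' hh'.
      have : linq (h' * d) z = 0 by rewrite linqM dz linq_x0.
      by rewrite -hh'.
    move/eqP: z0 => z0; exfalso; apply: z0; apply: Pinj.
    by rewrite /P gz hz !linq_x0.
  + split.
    * by move=> y [c ->]; exists (P c); rewrite key.
    * move=> y1 y2 [c1 ->] [c2 ->] hQ.
      pose Q' (y : LL) : LL := Q y.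
      pose S := [set (linq g c : LL) | c : LL].
      have sub : S \subset Q' @: S.
        apply/subsetP => y /imsetP [c _ ->]; apply/imsetP.
        exists (linq g (Pinv c)); first by apply: imset_f.
        by rewrite /Q' -key KP.
      have inj : {in S &, injective Q'}.
        by apply/imset_injP; rewrite eqn_leq leq_imset_card subset_leq_card.
      by apply: inj => //; apply: imset_f.
    * move=> z [c ->]; exists (linq g (Pinv c)); first by exists (Pinv c).
      by rewrite -key KP.
- case=> cop [_ Qinj _].
  have Pinj : injective P.
    move=> x1 x2 hP.
    have e1 : linq g x1 = linq g x2.
      by apply: Qinj; [exists x1 | exists x2 | rewrite -!key hP].
    have [a a0 ha] := hk x1.
    have aA0 : (a%:A : L) != 0 by rewrite scaler_eq0 oner_eq0 orbF.
    have hh : linq h x1 = linq h x2.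
      by move: hP; rewrite /P -e1 ha => /addrI /(mulfI aA0).
    apply/eqP; rewrite -subr_eq0; apply/eqP.
    have gz : linq g (x1 - x2) = 0 by rewrite linq_sub e1 subrr.
    have hz : linq h (x1 - x2) = 0 by rewrite linq_sub hh subrr.
    case/Bezout_coprimepP: cop => [[u v]] /= /eqpP [[c1 c2]] /= /andP[c10 c20] hc.
    have := congr1 (fun p => linq p (x1 - x2)) hc; rewrite /=.
    rewrite !linqZ linqD !linqM gz hz !linq_x0 addr0 mulr0 -polyC1 linqC.
    rewrite scale1r mul1r => /esym/eqP; rewrite mulf_eq0 scaler_eq0 oner_eq0 orbF.
    by rewrite (negbTE c20) => /eqP.
  exact: (@injF_bij LL P Pinj).
Qed.
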